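(* Let $\mathbf L$ be an algebraic lattice with an equa-interior operator $\eta$ satisfying property (I9). If $a$, $x$ and $z_i$ ($i\in I$, $I$ an arbitrary index set) are coatoms of $\mathbf L$ with $x\wedge z_i\le a$ properly for every $i\in I$, then $\eta(x)\vee\bigwedge_{i\in I}z_i=1$.
   Context: An equa-interior operator on an algebraic lattice $\mathbf L$ is a map $\eta:L\to L$ such that for all $x,y,z\in L$: (I1) $\eta(x)\le x$; (I2) $x\ge y$ implies $\eta(x)\ge\eta(y)$; (I3) $\eta^2(x)=\eta(x)$; (I4) $\eta(1)=1$; (I5) if $\eta(x)=u$ for all $x\in X\subseteq L$ then $\eta(\bigvee X)=u$; (I6) $\eta(x)\vee(y\wedge z)=(\eta(x)\vee y)\wedge(\eta(x)\vee z)$; (I7) the image $\eta(L)$ is the complete join subsemilattice of $L$ generated by the elements of $\eta(L)$ that are compact in $\mathbf L$; (I8) there is a compact element $w\in L$ with $\eta(w)=w$ such that the interval $[w,1]$ is isomorphic to the congruence lattice of a join semilattice with $0$. Define $\tau(y)=\bigvee\{u\in L:\eta(u)=\eta(y)\}$. Property (I9): for any index set $J$ and elements $x,c,z_j$ ($j\in J$) of $L$, if $\eta(x)\le c$ and $\bigwedge_{j\in J}\tau(z_j)\le\tau(c)$, then $\eta(\eta(x)\vee\bigwedge_{j\in J}\tau(x\wedge z_j))\le c$. For coatoms, ''$x\wedge z\le a$ properly'' means $x\wedge z\le a$ while $x\not\le a$ and $z\not\le a$. *)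

(* Defs.v *)
From Stdlib Require Import List.
Set Implicit Arguments.
Unset Strict Implicit.

Section Lattice.
Variables (L : Type) (le : L -> L -> Prop) (sup : (L -> Prop) -> L).

Definition complete_lattice : Prop :=
  (forall x, le x x) /\
  (forall x y, le x y -> le y x -> x = y) /\
  (forall x y z, le x y -> le y z -> le x z) /\
  (forall X : L -> Prop, forall x, X x -> le x (sup X)) /\
  (forall X : L -> Prop, forall u, (forall x, X x -> le x u) -> le (sup X) u).

Definition inf (X : L -> Prop) : L := sup (fun y => forall x, X x -> le y x).
Definition join (x y : L) : L := sup (fun u => u = x \/ u = y).
Definition meet (x y : L) : L := inf (fun u => u = x \/ u = y).
Definition top : L := sup (fun _ => True).

Definition compact (c : L) : Prop :=
  forall X : L -> Prop, le c (sup X) ->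
    exists l : list L, (forall y, In y l -> X y) /\ le c (sup (fun y => In y l)).

Definition algebraic : Prop :=
  complete_lattice /\
  forall x, x = sup (fun c => compact c /\ le c x).

Definition coatom (a : L) : Prop :=
  a <> top /\ forall y, le a y -> y = a \/ y = top.

Definition properly_below (x z a : L) : Prop :=
  le (meet x z) a /\ ~ le x a /\ ~ le z a.

Definition cjs_generated (G : L -> Prop) (y : L) : Prop :=
  forall S : L -> Prop,
    (forall g, G g -> S g) ->
    (forall X : L -> Prop, (forall x, X x -> S x) -> S (sup X)) ->
    S y.

End Lattice.

Definition join_semilattice0 (S : Type) (j : S -> S -> S) (z : S) : Prop :=
  (forall a b c, j a (j b c) = j (j a b) c) /\
  (forall a b, j a b = j b a) /\
  (forall a, j a a = a) /\
  (forall a, j z a = a).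

Definition congruence (S : Type) (j : S -> S -> S) (th : S -> S -> Prop) : Prop :=
  (forall a, th a a) /\
  (forall a b, th a b -> th b a) /\
  (forall a b c, th a b -> th b c -> th a c) /\
  (forall a b c d, th a b -> th c d -> th (j a c) (j b d)).

Definition interval_iso_Con (L : Type) (le : L -> L -> Prop) (sup : (L -> Prop) -> L)
  (w : L) (S : Type) (j : S -> S -> S) : Prop :=
  exists f : L -> (S -> S -> Prop),
    (forall y, le w y -> congruence j (f y)) /\
    (forall y1 y2, le w y1 -> le w y2 ->
       (le y1 y2 <-> (forall a b, f y1 a b -> f y2 a b))) /\
    (forall th, congruence j th ->
       exists y, le w y /\ forall a b, f y a b <-> th a b).

Section Operator.
Variables (L : Type) (le : L -> L -> Prop) (sup : (L -> Prop) -> L) (eta : L -> L).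

Definition equa_interior : Prop :=
  (forall x, le (eta x) x) /\
  (forall x y, le y x -> le (eta y) (eta x)) /\
  (forall x, eta (eta x) = eta x) /\
  eta (top sup) = top sup /\
  (forall (X : L -> Prop) (u : L), (exists x, X x) ->
     (forall x, X x -> eta x = u) -> eta (sup X) = u) /\
  (forall x y z, join sup (eta x) (meet le sup y z)
     = meet le sup (join sup (eta x) y) (join sup (eta x) z)) /\
  (forall y, (exists x, y = eta x) <->
     cjs_generated sup (fun c => (exists x, c = eta x) /\ compact le sup c) y) /\
  (exists w, compact le sup w /\ eta w = w /\
     exists (S : Type) (j : S -> S -> S) (z0 : S),
       join_semilattice0 j z0 /\ interval_iso_Con le sup w j).

Definition tau (y : L) : L := sup (fun u => eta u = eta y).

Definition I9 : Prop :=
  forall (J : Type) (x c : L) (z : J -> L),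
    le (eta x) c ->
    le (inf le sup (fun t => exists k, t = tau (z k))) (tau c) ->
    le (eta (join sup (eta x)
              (inf le sup (fun t => exists k, t = tau (meet le sup x (z k))))))
       c.

End Operator.

(* Main.v *)
Require Import Defs.
From Stdlib Require Import Classical.
Set Implicit Arguments.

Section H.
Variables (L : Type) (le : L -> L -> Prop) (sup : (L -> Prop) -> L).
Hypothesis CL : complete_lattice le sup.

Lemma refl x : le x x. Proof. apply CL. Qed.
Lemma anti x y : le x y -> le y x -> x = y. Proof. apply CL. Qed.
Lemma trans x y z : le x y -> le y z -> le x z. Proof. apply CL. Qed.
Lemma sup_ub (X : L -> Prop) x : X x -> le x (sup X). Proof. apply CL. Qed.
Lemma sup_lub (X : L -> Prop) u : (forall x, X x -> le x u) -> le (sup X) u.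
Proof. apply CL. Qed.

Lemma inf_lb (X : L -> Prop) x : X x -> le (inf le sup X) x.
Proof. intro Hx. unfold inf. apply sup_lub. intros y Hy. apply Hy, Hx. Qed.
Lemma inf_glb (X : L -> Prop) y : (forall x, X x -> le y x) -> le y (inf le sup X).
Proof. intro H. unfold inf. apply sup_ub. exact H. Qed.

Lemma join_l x y : le x (join sup x y). Proof. apply sup_ub. auto. Qed.
Lemma join_r x y : le y (join sup x y). Proof. apply sup_ub. auto. Qed.
Lemma join_lub x y u : le x u -> le y u -> le (join sup x y) u.
Proof. intros. apply sup_lub. intros w [-> | ->]; auto. Qed.
Lemma meet_l x y : le (meet le sup x y) x. Proof. apply inf_lb. auto. Qed.
Lemma meet_r x y : le (meet le sup x y) y. Proof. apply inf_lb. auto. Qed.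
Lemma meet_glb x y u : le u x -> le u y -> le u (meet le sup x y).
Proof. intros. apply inf_glb. intros w [-> | ->]; auto. Qed.
Lemma top_max x : le x (top sup). Proof. apply sup_ub. exact I. Qed.
End H.

Theorem theorem7p5 (L : Type) (le : L -> L -> Prop) (sup : (L -> Prop) -> L)
  (eta : L -> L) :
  algebraic le sup ->
  equa_interior le sup eta ->
  I9 le sup eta ->
  forall (a x : L) (I : Type) (z : I -> L),
    coatom le sup a -> coatom le sup x -> (forall i, coatom le sup (z i)) ->
    (forall i, properly_below le sup x (z i) a) ->
    join sup (eta x) (inf le sup (fun t => exists i, t = z i)) = top sup.
Proof.
  intros [CL _] EI H9 a x I z Ca Cx Cz Hp.
  destruct EI as [I1 [I2 [I3 [I4 [I5 [I6 _]]]]]].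
  assert (Tge : forall y, le y (tau sup eta y)).
  { intro y. apply (sup_ub CL). reflexivity. }
  assert (Teta : forall y, eta (tau sup eta y) = eta y).
  { intro y. apply I5. exists y. reflexivity. auto. }
  assert (Tco : forall y, coatom le sup y -> tau sup eta y = y).
  { intros y [Hy1 Hy2]. destruct (Hy2 _ (Tge y)) as [E|E]; auto.
    exfalso. apply Hy1. apply (anti CL). apply (top_max CL).
    rewrite <- I4, <- E, Teta. apply I1. }
  assert (Hm : forall y1 y2, le y1 y2 -> le (eta y1) (eta y2)) by (intros; apply I2; auto).
  assert (Key : forall p q, coatom le sup p -> le (meet le sup p q) a -> ~ le q a ->
                  le (eta a) p).
  { intros p q [_ Cp] Hpq Hq.
    destruct (Cp _ (join_r CL (eta a) p)) as [E|E].
    - rewrite <- E. apply (join_l CL).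
    - exfalso. apply Hq.
      assert (Hl : le (join sup (eta a) (meet le sup p q)) a).
      { apply (join_lub CL). apply I1. exact Hpq. }
      rewrite I6, E in Hl. eapply (trans CL); [|exact Hl].
      apply (meet_glb CL). apply (top_max CL). apply (join_r CL). }
  set (m := inf le sup (fun t => exists i, t = z i)).
  destruct (classic (exists i : I, True)) as [[i0 _]|NI]; cycle 1.
  { apply (anti CL). apply (top_max CL).
      eapply (trans CL); [|apply (join_r CL)]. apply (inf_glb CL).
      intros t [i ?]. exfalso. apply NI. exists i. exact Logic.I. }
  assert (Ea : forall i, eta (meet le sup x (z i)) = eta a).
  { intro i. destruct (Hp i) as [H1 [H2 H3]]. apply (anti CL).
    - apply Hm, H1.
    - rewrite <- (I3 a). apply Hm. apply (meet_glb CL).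
      + eapply Key; eauto.
      + eapply (Key (z i) x); eauto.
        eapply (trans CL); [|exact H1]. apply (meet_glb CL).
        apply (meet_r CL). apply (meet_l CL). }
  assert (Ta : forall i, tau sup eta (meet le sup x (z i)) = a).
  { intro i. unfold tau at 1. rewrite Ea. apply Tco, Ca. }
  assert (Nxa : ~ le (eta x) a).
  { intro Hxa. destruct (Hp i0) as [H1 [H2 H3]]. apply H2.
    assert (E : eta x = eta a).
    { apply (anti CL). rewrite <- (I3 x). apply Hm, Hxa.
      rewrite <- (Ea i0). apply Hm. apply (meet_l CL). }
    rewrite <- (Tco x Cx), <- (Tco a Ca). unfold tau. rewrite E. apply (refl CL). }
  assert (Jt : join sup (eta x) a = top sup).
  { destruct Ca as [_ Ca']. destruct (Ca' _ (join_r CL (eta x) a)) as [E|E]; auto.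
    exfalso. apply Nxa. rewrite <- E. apply (join_l CL). }
  assert (Hc := H9 I x (join sup (eta x) m) z (join_l CL _ _)).
  assert (Hi : inf le sup (fun t => exists k, t = tau sup eta (meet le sup x (z k))) = a).
  { apply (anti CL).
    - apply (inf_lb CL). exists i0. rewrite Ta. reflexivity.
    - apply (inf_glb CL). intros t [k ->]. rewrite Ta. apply (refl CL). }
  rewrite Hi, Jt, I4 in Hc.
  apply (anti CL). apply (top_max CL). apply Hc.
  eapply (trans CL); [|apply Tge].
  eapply (trans CL); [|apply (join_r CL)].
  apply (inf_glb CL). intros t [k ->]. apply (inf_lb CL). exists k.
  rewrite Tco; auto.
Qed.
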